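(* Let $(X,T)$ be a topologically transitive system. Then either $(X,T)$ is thickly sensitive (and then $\mathrm{Eq}_{\mathrm{syn}}(X,T)=\varnothing$), or $\mathrm{Tran}(X,T)\subset \mathrm{Eq}_{\mathrm{syn}}(X,T)$. In particular, if $(X,T)$ is minimal then it is either thickly sensitive or syndetically equicontinuous.
   Context: $(X,\varrho)$ compact metric, $T$ continuous surjection. $S_T(U,\delta)=\{n\in\mathbb{N}:\exists x_1,x_2\in U,\ \varrho(T^nx_1,T^nx_2)>\delta\}$ and $J_T(U,\delta)=\mathbb N\setminus S_T(U,\delta)$. A set $\mathcal S\subset\mathbb N$ is thick if it contains arbitrarily long blocks of consecutive integers, syndetic if it has bounded gaps (there is $m$ with $\mathcal S\cap\{n,\dots,n+m\}\ne\varnothing$ for all $n$). $(X,T)$ is thickly sensitive if there is $\delta>0$ with $S_T(U,\delta)$ thick for all opene $U$. A point $x$ is syndetically equicontinuous if for every $\varepsilon>0$ there is a neighborhood $U$ of $x$ with $J_T(U,\varepsilon)$ syndetic; $\mathrm{Eq}_{\mathrm{syn}}(X,T)$ is the set of such points, and $(X,T)$ is syndetically equicontinuous if $\mathrm{Eq}_{\mathrm{syn}}(X,T)=X$. $\mathrm{Tran}(X,T)$ is the set of points with dense orbit; transitive means $\mathrm{Tran}(X,T)\ne\varnothing$; minimal means $\mathrm{Tran}(X,T)=X$. *)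

(* Defs.v *)
From Stdlib Require Import Reals List.
Open Scope R_scope.

Section Defs.
Context {X : Type} (d : X -> X -> R).

Definition is_metric : Prop :=
  (forall x y, 0 <= d x y) /\
  (forall x y, d x y = 0 <-> x = y) /\
  (forall x y, d x y = d y x) /\
  (forall x y z, d x z <= d x y + d y z).

Definition ball (x : X) (r : R) : X -> Prop := fun y => d x y < r.

Definition is_open (U : X -> Prop) : Prop :=
  forall x, U x -> exists r, 0 < r /\ forall y, ball x r y -> U y.

Definition opene (U : X -> Prop) : Prop := is_open U /\ exists x, U x.

Definition neighborhood (x : X) (U : X -> Prop) : Prop :=
  exists r, 0 < r /\ forall y, ball x r y -> U y.

Definition compact_metric : Prop :=
  forall (I : Type) (U : I -> X -> Prop),
    (forall i, is_open (U i)) -> (forall x, exists i, U i x) ->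
    exists l : list I, forall x, exists i, In i l /\ U i x.

Definition continuous_map (T : X -> X) : Prop :=
  forall x eps, 0 < eps -> exists delta, 0 < delta /\
    forall y, d x y < delta -> d (T x) (T y) < eps.

Definition surjective_map (T : X -> X) : Prop := forall y, exists x, T x = y.

Definition iter (T : X -> X) (n : nat) (x : X) : X := Nat.iter n T x.

Definition S_T (T : X -> X) (U : X -> Prop) (delta : R) : nat -> Prop :=
  fun n => exists x1 x2, U x1 /\ U x2 /\ d (iter T n x1) (iter T n x2) > delta.
Definition J_T (T : X -> X) (U : X -> Prop) (delta : R) : nat -> Prop :=
  fun n => ~ S_T T U delta n.

Definition thick (S : nat -> Prop) : Prop :=
  forall L : nat, exists n : nat, forall k : nat, (k < L)%nat -> S (n + k)%nat.

Definition syndetic (S : nat -> Prop) : Prop :=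
  exists m : nat, forall n : nat, exists k : nat, (n <= k <= n + m)%nat /\ S k.

Definition thickly_sensitive (T : X -> X) : Prop :=
  exists delta, 0 < delta /\ forall U, opene U -> thick (S_T T U delta).

Definition syn_equicontinuous_point (T : X -> X) (x : X) : Prop :=
  forall eps, 0 < eps -> exists U, neighborhood x U /\ syndetic (J_T T U eps).

Definition syndetically_equicontinuous (T : X -> X) : Prop :=
  forall x, syn_equicontinuous_point T x.

Definition Tran (T : X -> X) (x : X) : Prop :=
  forall V, opene V -> exists n, V (iter T n x).

Definition top_transitive (T : X -> X) : Prop := exists x, Tran T x.
Definition minimal_system (T : X -> X) : Prop := forall x, Tran T x.
End Defs.

(* Main.v *)
Require Import Defs.
From Stdlib Require Import Reals Lra Lia Classical.
Open Scope R_scope.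

Lemma iter_add {X : Type} (T : X -> X) m n x :
  iter T (m + n) x = iter T m (iter T n x).
Proof. unfold iter; induction m; simpl; [reflexivity|now rewrite IHm]. Qed.

Lemma iter_cont {X : Type} (d : X -> X -> R) (T : X -> X) :
  continuous_map d T -> forall n x eps, 0 < eps -> exists delta, 0 < delta /\
    forall y, d x y < delta -> d (iter T n x) (iter T n y) < eps.
Proof.
  intros Hc n; induction n; intros x eps He.
  - exists eps; split; auto.
  - destruct (Hc (iter T n x) eps He) as [d1 [Hd1 H1]].
    destruct (IHn x d1 Hd1) as [d2 [Hd2 H2]].
    exists d2; split; auto. intros y Hy. simpl. apply H1, H2, Hy.
Qed.

Lemma not_ts {X : Type} (d : X -> X -> R) (T : X -> X) :
  continuous_map d T -> ~ thickly_sensitive d T ->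
  forall x, Tran d T x -> syn_equicontinuous_point d T x.
Proof.
  intros Hc Hnts x Hx eps He.
  assert (HU : exists U, opene d U /\ ~ thick (S_T d T U eps)).
  { apply NNPP; intro Hn; apply Hnts; exists eps; split; auto.
    intros U HU; apply NNPP; intro Ht; apply Hn; exists U; auto. }
  destruct HU as [U [HUo Hnt]].
  assert (HL : exists L, forall n, exists k, (k < L)%nat /\ ~ S_T d T U eps (n + k)).
  { apply NNPP; intro Hn; apply Hnt; intro L.
    apply NNPP; intro Hn2; apply Hn; exists L; intro n.
    apply NNPP; intro Hn3; apply Hn2; exists n; intros k Hk.
    apply NNPP; intro Hn4; apply Hn3; exists k; auto. }
  destruct HL as [L HL].
  destruct (Hx U HUo) as [n Hn].
  destruct HUo as [HUop _].
  destruct (HUop _ Hn) as [r [Hr Hball]].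
  destruct (iter_cont d T Hc n x r Hr) as [de [Hde Hcd]].
  exists (fun y => U (iter T n y)). split.
  - exists de; split; auto. intros y Hy. apply Hball. unfold ball. apply Hcd, Hy.
  - exists (L + n)%nat. intro N. destruct (HL N) as [k [Hk HJ]].
    exists (N + k + n)%nat. split; [lia|].
    intros [y1 [y2 [H1 [H2 H3]]]]. apply HJ.
    exists (iter T n y1), (iter T n y2). repeat split; auto.
    rewrite <- !iter_add. exact H3.
Qed.

Lemma ts_none {X : Type} (d : X -> X -> R) (T : X -> X) :
  is_metric d -> thickly_sensitive d T -> forall x, ~ syn_equicontinuous_point d T x.
Proof.
  intros [Hpos [Hzero [Hsym Htri]]] [de [Hde Hts]] x Hx.
  destruct (Hx de Hde) as [U [[r [Hr HbU]] [m Hm]]].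
  assert (Hop : opene d (ball d x r)).
  { split.
    - intros y Hy. exists (r - d x y). split; [unfold ball in Hy; lra|].
      intros z Hz. unfold ball in *. specialize (Htri x y z). lra.
    - exists x. unfold ball. assert (d x x = 0) by (apply Hzero; auto). lra. }
  destruct (Hts _ Hop (S m)) as [n0 Hn0].
  destruct (Hm n0) as [k [Hk HJ]].
  apply HJ. destruct (Hn0 (k - n0)%nat ltac:(lia)) as [y1 [y2 [H1 [H2 H3]]]].
  replace (n0 + (k - n0))%nat with k in H3 by lia.
  exists y1, y2. repeat split; auto.
Qed.

Theorem theorem3p4 (X : Type) (d : X -> X -> R) (T : X -> X)
  (Hmetric : is_metric d) (Hcompact : compact_metric d)
  (Hcont : continuous_map d T) (Hsurj : surjective_map T) :
  (top_transitive d T ->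
     (thickly_sensitive d T /\ (forall x, ~ syn_equicontinuous_point d T x))
     \/ (forall x, Tran d T x -> syn_equicontinuous_point d T x))
  /\
  (minimal_system d T -> thickly_sensitive d T \/ syndetically_equicontinuous d T).
Proof.
  split.
  - intros _. destruct (classic (thickly_sensitive d T)) as [H|H].
    + left; split; auto. apply ts_none; auto.
    + right. apply not_ts; auto.
  - intros Hmin. destruct (classic (thickly_sensitive d T)) as [H|H].
    + left; auto.
    + right. intro x. apply not_ts; auto.
Qed.
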